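(* Let $z\ge 0$ and let $C_1,F_1,\dots,C_\ell,F_\ell$ be a $z$-antler-sequence for an undirected multigraph $G$. Then for every $1\le i\le\ell$, the pair $(C_1\cup\dots\cup C_i,\;F_1\cup\dots\cup F_i)$ is a $z$-antler in $G$.
   Context: A feedback vertex set (FVS) of $G$ is a set $X\subseteq V(G)$ with $G-X$ acyclic (self-loops and pairs of parallel edges count as cycles); $\mathrm{fvs}(G)$ is the minimum size of a FVS. For disjoint $X,Y$, $e(X,Y)$ is the number of edges between $X$ and $Y$. A feedback vertex cut (FVC) in $G$ is a pair of disjoint sets $C,F\subseteq V(G)$ such that $G[F]$ is a forest and every tree $T$ of $G[F]$ satisfies $e(V(T),V(G)\setminus(C\cup F))\le1$. An antler is a FVC $(C,F)$ with $|C|\le\mathrm{fvs}(G[C\cup F])$. For $C\subseteq V(G)$, a $C$-certificate is a subgraph $H$ of $G$ such that $C$ is a minimum FVS of $H$; it has order $z$ if every component $H'$ of $H$ satisfies $\mathrm{fvs}(H')=|C\cap V(H')|\le z$. A $z$-antler is an antler $(C,F)$ such that $G[C\cup F]$ contains a $C$-certificate of order $z$. A $z$-antler-sequence for $G$ is a sequence of pairwise disjoint vertex sets $C_1,F_1,\dots,C_\ell,F_\ell$ such that for each $i$, $(C_i,F_i)$ is a $z$-antler in $G-\bigcup_{j<i}(C_j\cup F_j)$. *)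

(* Defs.v *)
From mathcomp Require Import all_boot.
Set Implicit Arguments. Unset Strict Implicit. Unset Printing Implicit Defensive.

(* A finite undirected multigraph on a vertex set V : {set T} is given by a
   symmetric multiplicity function m : T -> T -> nat; m x y = number of edges
   between x and y (m x x = number of self-loops at x).  The graph G[S] induced
   on S ⊆ V uses m restricted to S × S.  G - X is the graph induced on V :\: X. *)

Section Multigraph.
Variable T : finType.
Implicit Types (V S X C F : {set T}) (m : T -> T -> nat).

Definition adj S m : rel T := fun x y => [&& x \in S, y \in S & 0 < m x y].

(* the multigraph (S, m|S) contains a cycle: a self-loop, a pair of parallel
   edges, or a cycle through >= 3 distinct vertices *)
Definition has_cycle S m : Prop :=
  (exists2 x, x \in S & 0 < m x x) \/
  (exists x y, [/\ x \in S, y \in S, x != y & 1 < m x y]) \/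
  (exists s : seq T, [/\ 3 <= size s, uniq s, {subset s <= S} & cycle (adj S m) s]).

Definition acyclic S m : Prop := ~ has_cycle S m.

Definition is_fvs S m X : Prop := X \subset S /\ acyclic (S :\: X) m.

Definition fvs_ge S m (k : nat) : Prop := forall X, is_fvs S m X -> k <= #|X|.

Definition fvs_is S m (k : nat) : Prop :=
  fvs_ge S m k /\ exists2 X, is_fvs S m X & #|X| = k.

Definition comp S m x : {set T} := [set y in S | connect (adj S m) x y].

Definition ecount m (A B : {set T}) : nat := \sum_(x in A) \sum_(y in B) m x y.

Definition fvc V m C F : Prop :=
  [/\ C :|: F \subset V, [disjoint C & F], acyclic F m &
      forall x, x \in F -> ecount m (comp F m x) (V :\: (C :|: F)) <= 1].

Definition antler V m C F : Prop := fvc V m C F /\ fvs_ge (C :|: F) m #|C|.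

Definition subgraph S m (VH : {set T}) (mH : T -> T -> nat) : Prop :=
  [/\ VH \subset S,
      forall x y, mH x y = mH y x,
      forall x y, mH x y <= m x y &
      forall x y, 0 < mH x y -> x \in VH /\ y \in VH].

Definition certificate_of_order (z : nat) C (VH : {set T}) (mH : T -> T -> nat) : Prop :=
  [/\ is_fvs VH mH C, fvs_ge VH mH #|C| &
      forall x, x \in VH ->
        fvs_is (comp VH mH x) mH #|C :&: comp VH mH x| /\
        #|C :&: comp VH mH x| <= z].

Definition z_antler V m (z : nat) C F : Prop :=
  antler V m C F /\
  exists VH mH, subgraph (C :|: F) m VH mH /\ certificate_of_order z C VH mH.

(* C_0, F_0, ..., C_(l-1), F_(l-1) is a z-antler-sequence for (V, m) *)
Definition antler_seq V m (z l : nat) (C F : nat -> {set T}) : Prop :=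
  (forall i j, i < l -> j < l -> i != j ->
     [/\ [disjoint C i & C j], [disjoint F i & F j] & [disjoint C i & F j]]) /\
  (forall i, i < l -> [disjoint C i & F i]) /\
  (forall i, i < l ->
     z_antler (V :\: \bigcup_(j < i) (C j :|: F j)) m z (C i) (F i)).

End Multigraph.

(* Main.v *)
Require Import Defs.
From mathcomp Require Import all_boot.
Set Implicit Arguments. Unset Strict Implicit. Unset Printing Implicit Defensive.

Section P.
Variable T : finType.
Implicit Types (S U A B : {set T}) (mm : T -> T -> nat).

Lemma comp_sub S mm x U : x \in U ->
  (forall y z, y \in U -> z \in Defs.comp S mm x -> adj S mm y z -> z \in U) ->
  {subset Defs.comp S mm x <= U}.
Proof.
move=> xU cl y; rewrite inE => /andP [yS /connectP [p pth ->]].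
have H: forall a0 q, a0 \in U -> connect (adj S mm) x a0 ->
   path (adj S mm) a0 q -> last a0 q \in U.
  move=> a0 q; elim: q a0 => [|a q IH] a0 a0U cx //= /andP [e pth2].
  have cxa: connect (adj S mm) x a by apply: connect_trans cx (connect1 e).
  apply: IH => //; apply: (cl a0) => //.
  by rewrite inE cxa andbT; case/and3P: e.
exact: H.
Qed.


Definition cond S mm (P : pred T) S' mm' := forall x y, x \in S -> y \in S ->
  0 < mm x y -> P x -> [/\ P y, x \in S', y \in S' & mm x y <= mm' x y].

Lemma path_cond S mm P S' mm' : cond S mm P S' mm' ->
  forall q a, a \in S -> P a -> path (adj S mm) a q ->
  path (adj S' mm') a q && all (fun y => P y && (y \in S')) q.
Proof.
move=> c; elim=> [|b q IH] a aS Pa //= /andP [/and3P [_ bS pab] pth].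
have [Pb aS' bS' le] := c a b aS bS pab Pa.
have /andP [-> ->] := IH b bS Pb pth.
by rewrite /adj aS' bS' Pb (leq_trans pab le).
Qed.

Lemma hc_start S mm : has_cycle S mm -> exists x0, [/\ x0 \in S,
  (exists2 y, y \in S & 0 < mm x0 y) &
  forall P S' mm', cond S mm P S' mm' -> P x0 -> has_cycle S' mm'].
Proof.
case => [[x xS lp] | [[x [y [xS yS xy pm]]] | [s [sz us sS cy]]]].
- exists x; split => //; first by exists x.
  move=> P S' mm' c Px; have [_ xS' _ le] := c x x xS xS lp Px.
  by left; exists x => //; exact: leq_trans lp le.
- exists x; split => //; first by exists y => //; exact: ltnW.
  move=> P S' mm' c Px; have [Py xS' yS' le] := c x y xS yS (ltnW pm) Px.
  by right; left; exists x, y; split => //; exact: leq_trans pm le.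
- case: s sz us sS cy => [|x0 p] //= sz us sS cy.
  have x0S : x0 \in S by apply: sS; rewrite mem_head.
  exists x0; split => //.
    case: p sz us sS cy => [|a p] //= _ _ sS /andP [/and3P [_ aS pa] _].
    by exists a.
  move=> P S' mm' c Px.
  have /andP [cy' al] := path_cond c x0S Px cy.
  right; right; exists (x0 :: p); split => //.
  move=> y; rewrite inE => /orP [/eqP -> | yp].
    by have := allP al x0; rewrite mem_rcons mem_head => /(_ isT) /andP [].
  by have := allP al y; rewrite mem_rcons inE yp orbT => /(_ isT) /andP [].
Qed.

Lemma sum_sub (A A' : {set T}) (F : T -> nat) :
  A \subset A' -> \sum_(x in A) F x <= \sum_(x in A') F x.
Proof.
move=> sub; rewrite [X in _ <= X](big_setID A) /= (setIidPr sub).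
exact: leq_addr.
Qed.

Lemma ecount_mono mm A A' B B' : A \subset A' -> B \subset B' ->
  ecount mm A B <= ecount mm A' B'.
Proof.
move=> sA sB; rewrite /ecount.
apply: (leq_trans (sum_sub _ sA)); apply: leq_sum => x _; exact: sum_sub.
Qed.

Lemma ecount_two mm A B y z y' z' : y \in A -> z \in B -> y' \in A ->
  z' \in B -> (y, z) != (y', z') -> mm y z + mm y' z' <= ecount mm A B.
Proof.
move=> yA zB y'A z'B ne; rewrite /ecount pair_big_dep /=.
rewrite (bigD1 (y,z)) /=; last by rewrite yA zB.
rewrite (bigD1 (y',z')) /=; last by rewrite y'A z'B eq_sym ne.
by rewrite addnA leq_addr.
Qed.

Lemma cross (e : rel T) (P : pred T) x p : uniq (x :: p) -> path e x p ->
  P x -> ~~ P (last x p) ->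
  exists y z, [/\ e y z, P y, ~~ P z &
          [/\ y \in x :: p, z \in p & (y = x -> z = head x p)]].
Proof.
elim: p x => [|a p IH] x /=; first by move=> _ _ ->.
move=> /andP [xn un] /andP [exa pth] Px nPl.
case Pa: (P a).
  have [y [z [eyz Py nPz [yin zin hd]]]] := IH a un pth Pa nPl.
  exists y, z; split => //; split; first by rewrite inE yin orbT.
  - by rewrite inE zin orbT.
  - by move=> yx; move: xn; rewrite -yx yin.
by exists x, a; split => //; try split; rewrite ?Pa ?mem_head ?inE ?eqxx ?orbT.
Qed.

Lemma cycle_restrict S S' mm s : {subset s <= S'} -> 3 <= size s -> uniq s ->
  cycle (adj S mm) s -> has_cycle S' mm.
Proof.
move=> sS' sz us cy; right; right; exists s; split => //.
apply: (sub_in_cycle (P := mem S')) cy; last by apply/allP.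
by move=> x y xS yS /and3P [_ _ p]; rewrite /adj xS yS p.
Qed.

Lemma comp_in S mm x : x \in S -> x \in Defs.comp S mm x.
Proof. by move=> xS; rewrite inE xS connect0. Qed.

Lemma comp_subS S mm x : Defs.comp S mm x \subset S.
Proof. by apply/subsetP => y; rewrite inE => /andP []. Qed.

Lemma comp_step S mm x y z : y \in Defs.comp S mm x -> z \in S -> 0 < mm y z ->
  z \in Defs.comp S mm x.
Proof.
rewrite !inE => /andP [yS cy] zS p; rewrite zS /=.
by apply: connect_trans cy (connect1 _); rewrite /adj yS zS p.
Qed.

Lemma ecount1 mm A B x y : x \in A -> y \in B -> mm x y <= ecount mm A B.
Proof.
move=> xA yB.
have sx : [set x] \subset A by rewrite sub1set.
have sy : [set y] \subset B by rewrite sub1set.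
by have := ecount_mono mm sx sy; rewrite /ecount !big_set1.
Qed.

Lemma acyclic_union mm (msym : forall x y, mm x y = mm y x) C1 F1 F2 :
  acyclic F1 mm -> acyclic F2 mm ->
  (forall x, x \in F1 ->
     ecount mm (Defs.comp F1 mm x) (setT :\: (C1 :|: F1)) <= 1) ->
  F2 \subset setT :\: (C1 :|: F1) -> acyclic (F1 :|: F2) mm.
Proof.
move=> a1 a2 ec sF2 hc.
set R := setT :\: (C1 :|: F1) in ec sF2.
have F2R : forall y, y \in F2 -> y \in R by apply/subsetP.
have F2n1 : forall y, y \in F2 -> y \notin F1.
  by move=> y /F2R; rewrite !inE; case: (y \in F1); rewrite ?orbT.
have key : forall a y z, a \in F1 -> y \in Defs.comp F1 mm a ->
    z \in F1 :|: F2 -> z \notin Defs.comp F1 mm a -> 0 < mm y z -> z \in R.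
  move=> a y z aF yA; rewrite inE => /orP [zF|zF] zA p; last exact: F2R.
  by rewrite (comp_step yA zF p) in zA.
case: hc => [[x xS lp] | [[x [y [xS yS xy pm]]] | [s [sz us sS cy]]]].
- by move: xS; rewrite inE => /orP [] xF; [apply a1|apply a2]; left; exists x.
- move: xS yS; rewrite !inE => /orP [] xF /orP [] yF.
  + by apply a1; right; left; exists x, y; split.
  + have := leq_trans (ecount1 mm (comp_in mm xF) (F2R y yF)) (ec x xF).
    by rewrite leqNgt pm.
  + have := leq_trans (ecount1 mm (comp_in mm yF) (F2R x xF)) (ec y yF).
    by rewrite leqNgt -msym pm.
  + by apply a2; right; left; exists x, y; split.
set e := adj (F1 :|: F2) mm in cy.
case: (pickP (fun a => (a \in s) && (a \in F1))) => [a /andP [aS aF]| no];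
  last first.
  apply: a2; apply: (cycle_restrict (S := F1 :|: F2)) cy => // y ys.
  have := sS y ys; rewrite inE; have := no y; rewrite /= ys /= => -> //.
set A := Defs.comp F1 mm a.
have aA : a \in A by exact: comp_in.
case: (pickP (fun b => (b \in s) && (b \notin A))) => [b /andP [bs bA] | allA];
  last first.
  apply: a1; apply: (cycle_restrict (S := F1 :|: F2)) cy => // y ys.
  have := allA y; rewrite /= ys /= => /negbFE yA.
  exact: (subsetP (comp_subS F1 mm a)).
have [i s' rs] := rot_to aS.
have cy' : cycle e (a :: s') by rewrite -rs rot_cycle.
have us' : uniq (a :: s') by rewrite -rs rot_uniq.
have sz' : 3 <= size (a :: s') by rewrite -rs size_rot.
have bs' : b \in s'.
  have : b \in a :: s' by rewrite -rs mem_rot.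
  rewrite inE => /orP [/eqP ba|//]; by rewrite ba aA in bA.
move: cy' us' sz'; case/splitPr: bs' => p1 p2 cy' us' sz'.
rewrite /= rcons_cat /= cat_path /= in cy'.
case/and3P: cy' => pth1 elb pth2.
have pf : path e a (rcons p1 b) by rewrite rcons_path pth1 elb.
have := us'; rewrite (_ : a :: p1 ++ b :: p2 = (a :: p1) ++ (b :: p2)) //.
rewrite cat_uniq => /and3P [u1 /hasPn dis u2].
have dis' : forall u, u \in a :: p1 -> u \in b :: p2 -> False.
  by move=> u h1 h2; have := dis u h2; rewrite /= h1.
have ab : a != b by apply/eqP => ab; rewrite -ab aA in bA.
have bp1 : b \notin p1.
  by apply/negP => h; apply: (dis' b); rewrite inE ?h ?eqxx ?orbT.
have ap2 : a \notin p2.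
  by apply/negP => h; apply: (dis' a); rewrite inE ?h ?eqxx ?orbT.
move: u1 u2; rewrite /= => /andP [ap1 up1] /andP [bp2 up2].
have Ua : uniq (a :: rcons p1 b).
  by rewrite /= rcons_uniq mem_rcons inE negb_or ab ap1 bp1 up1.
have Ub : uniq (b :: rcons p2 a).
  by rewrite /= rcons_uniq mem_rcons inE negb_or eq_sym ab bp2 ap2 up2.
have l1 : ~~ (last a (rcons p1 b) \in A) by rewrite last_rcons.
have l2 : ~~ ~~ (last b (rcons p2 a) \in A) by rewrite last_rcons negbK.
have [y [z [eyz yA zA [yin zin hd]]]] :=
  cross (P := fun u => u \in A) Ua pf aA l1.
have [y' [z' [eyz' yA' zA' [yin' zin' hd']]]] :=
  cross (P := fun u => u \notin A) Ub pth2 bA l2.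
rewrite negbK in zA'.
case/and3P: eyz => _ zS pyz.
case/and3P: eyz' => y'S _ pyz'.
rewrite msym in pyz'.
have zR := key a y z aF yA zS zA pyz.
have y'R := key a z' y' aF zA' y'S yA' pyz'.
have ne : (y, z) != (z', y').
  apply/negP => /eqP [yz' zy'].
  have ya : y = a.
    have yp : (y == a) || (y \in p1).
      move: yin; rewrite inE mem_rcons inE.
      case/orP=> [->//|/orP [/eqP yb|->]]; last by rewrite orbT.
      by rewrite yb in yA; rewrite yA in bA.
    case/orP: yp => [/eqP //| yp1].
    move: zin'; rewrite -yz' mem_rcons inE => /orP [/eqP //|yp2].
    by case: (dis' y); rewrite inE ?yp1 ?yp2 ?orbT.
  have zb : z = b.
    have zp : (z == b) || (z \in p1).
      by move: zin; rewrite mem_rcons inE.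
    case/orP: zp => [/eqP //| zp1].
    have : (z == a) || (z \in p2).
      move: yin'; rewrite -zy' inE mem_rcons inE.
      case/orP=> [/eqP zb|/orP [->//|->]]; last by rewrite orbT.
      by move: zp1; rewrite zb (negbTE bp1).
    case/orP => [/eqP za|zp2]; first by rewrite za aA in zA.
    by case: (dis' z); rewrite inE ?zp1 ?zp2 ?orbT.
  have h1 := hd ya; have h2 := hd' (etrans (esym zy') zb).
  have p1n : p1 = [::].
    case E: p1 h1 => [//|c q] /= h1.
    by move: bp1; rewrite E -zb h1 inE eqxx.
  have p2n : p2 = [::].
    case E: p2 h2 => [//|c q] /= h2.
    by move: ap2; rewrite E -ya yz' h2 inE eqxx.
  by rewrite p1n p2n in sz'.
have := leq_trans (ecount_two mm yA zR zA' y'R ne) (ec a aF).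
by rewrite leqNgt (leq_add pyz pyz').
Qed.

Lemma adj_sym S mm : (forall x y, mm x y = mm y x) -> symmetric (adj S mm).
Proof. by move=> ms x y; rewrite /adj ms andbCA. Qed.

Lemma comp_same S mm x w : (forall x y, mm x y = mm y x) ->
  w \in Defs.comp S mm x -> Defs.comp S mm x = Defs.comp S mm w.
Proof.
move=> ms; rewrite inE => /andP [_ cxw]; apply/setP => y.
by rewrite !inE (same_connect (sym_connect_sym (adj_sym S ms)) cxw).
Qed.

Lemma comp_bound mm (msym : forall x y, mm x y = mm y x) (C1 F1 C2 F2 : {set T}) :
  (forall x, x \in F1 ->
     ecount mm (Defs.comp F1 mm x) (setT :\: (C1 :|: F1)) <= 1) ->
  (forall x, x \in F2 ->
     ecount mm (Defs.comp F2 mm x) ((setT :\: (C1 :|: F1)) :\: (C2 :|: F2)) <= 1) ->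
  C2 :|: F2 \subset setT :\: (C1 :|: F1) ->
  forall x, x \in F1 :|: F2 ->
  ecount mm (Defs.comp (F1 :|: F2) mm x) (setT :\: ((C1 :|: C2) :|: (F1 :|: F2))) <= 1.
Proof.
move=> ec1 ec2 sub x xF.
set R := setT :\: ((C1 :|: C2) :|: (F1 :|: F2)).
set R1 := setT :\: (C1 :|: F1).
set R2 := R1 :\: (C2 :|: F2).
have RR1 : R \subset R1.
  apply/subsetP => r; rewrite !inE.
  by case: (r \in C1); case: (r \in C2); case: (r \in F1); case: (r \in F2).
have RR2 : R \subset R2.
  apply/subsetP => r; rewrite !inE.
  by case: (r \in C1); case: (r \in C2); case: (r \in F1); case: (r \in F2).
have F2R1 : forall y, y \in F2 -> y \in R1.
  by move=> y yF; apply: (subsetP sub); rewrite inE yF orbT.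
have F2nR : forall y, y \in F2 -> y \notin R.
  by move=> y yF; rewrite !inE yF !orbT.
set T' := Defs.comp (F1 :|: F2) mm x.
case: (pickP (fun w => (w \in T') && (w \in F2))) => [w /andP [wT wF] | no].
  set B := Defs.comp F2 mm w.
  set U1 := [set u | (u \in F1) && [exists a, [exists b,
               [&& a \in Defs.comp F1 mm u, b \in B & 0 < mm a b]]]].
  set U := B :|: U1.
  have BF2 : forall b, b \in B -> b \in F2.
    by move=> b; apply: (subsetP (comp_subS F2 mm w)).
  have two : forall u a b c d, u \in F1 -> a \in Defs.comp F1 mm u ->
      c \in Defs.comp F1 mm u -> b \in R1 -> d \in R1 -> 0 < mm a b ->
      0 < mm c d -> (a, b) = (c, d).
    move=> u a b c d uF aC cC bR dR pab pcd; apply/eqP; apply/negPn/negP=> ne.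
    have := leq_trans (ecount_two mm aC bR cC dR ne) (ec1 u uF).
    by rewrite leqNgt (leq_add pab pcd).
  have TU : {subset T' <= U}.
    rewrite /T' (comp_same msym wT); apply: comp_sub.
      by rewrite /U inE comp_in.
    move=> y z yU zT /and3P [yS zS pyz].
    case/setUP: yU => [yB | yU1].
      case/setUP: zS => zF.
        rewrite /U /U1 !inE zF /=; apply/orP; right; apply/existsP; exists z.
        by apply/existsP; exists y; rewrite comp_in // yB /= msym pyz.
      by rewrite /U inE (comp_step yB zF pyz).
    move: yU1; rewrite inE => /andP [yF /existsP [a /existsP [b /and3P [aC bB pab]]]].
    case/setUP: zS => zF.
      rewrite /U /U1 !inE zF /=; apply/orP; right; apply/existsP; exists a.
      apply/existsP; exists b; rewrite bB pab !andbT.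
      have zC : z \in Defs.comp F1 mm y by exact: comp_step (comp_in mm yF) zF pyz.
      by rewrite -(comp_same msym zC).
    have [_ <-] := two y a b y z yF aC (comp_in mm yF) (F2R1 b (BF2 b bB))
      (F2R1 z zF) pab pyz.
    by rewrite /U inE bB.
  have wF2 := wF.
  apply: leq_trans (ec2 w wF2).
  apply: leq_trans (ecount_mono mm (subxx B) RR2).
  have sTU : T' \subset U by apply/subsetP.
  apply: leq_trans (ecount_mono mm sTU (subxx R)) _.
  rewrite /ecount (big_setID B) /= (setIidPr _); last first.
    by rewrite /U subsetUl.
  rewrite [X in _ + X]big1 ?addn0 //
.
  move=> u; rewrite /U /U1 !inE => /andP [nuB /orP [uB|]].
    by rewrite uB in nuB.
  move=> /andP [uF /existsP [a /existsP [b /and3P [aC bB pab]]]].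
  apply: big1 => r rR; apply/eqP; rewrite -leqn0 leqNgt; apply/negP => pur.
  have [_ br] := two u a b u r uF aC (comp_in mm uF) (F2R1 b (BF2 b bB))
    (subsetP RR1 r rR) pab pur.
  by move: rR; rewrite -br (negbTE (F2nR b (BF2 b bB))).
have xF1 : x \in F1.
  move: xF; rewrite inE => /orP [//|xF2].
  by have := no x; rewrite /= xF2 andbT comp_in // inE xF2 orbT.
have TC : T' \subset Defs.comp F1 mm x.
  apply/subsetP; apply: comp_sub; first exact: comp_in.
  move=> y z yC zT /and3P [_ zS pyz].
  case/setUP: zS => zF; first exact: comp_step yC zF pyz.
  by have := no z; rewrite /= zF zT.
exact: leq_trans (ecount_mono mm TC RR1) (ec1 x xF1).
Qed.

Lemma acyclic_sub S S' mm mm' : S \subset S' ->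
  (forall x y, x \in S -> mm x y <= mm' x y) -> acyclic S' mm' -> acyclic S mm.
Proof.
move=> sub le a hc; apply: a; have [x0 [_ _ H]] := hc_start hc.
apply: (H predT) => // x y xS yS _ _; split => //; try exact: (subsetP sub).
exact: le.
Qed.

Lemma card_two (C1 C2 X A1 A2 : {set T}) : #|C1| <= #|X :&: A1| ->
  #|C2| <= #|X :&: A2| -> [disjoint A1 & A2] -> #|C1 :|: C2| <= #|X|.
Proof.
move=> h1 h2 d.
apply: leq_trans (leq_card_setU C1 C2).1 _.
apply: leq_trans (leq_add h1 h2) _.
have d' : [disjoint X :&: A1 & X :&: A2].
  rewrite -setI_eq0 in d; rewrite -setI_eq0.
  by rewrite setIACA setIid (eqP d) setI0.
have := (leq_card_setU (X :&: A1) (X :&: A2)).2; rewrite d' => /eqP <-.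
by apply: subset_leq_card; rewrite subUset !subsetIl.
Qed.

Lemma fvs_ext S mm mm' k : (forall x y, x \in S -> mm x y = mm' x y) ->
  fvs_is S mm' k -> fvs_is S mm k.
Proof.
move=> eq [g [X [sX aX] cX]].
have sD : forall X, S :\: X \subset S by move=> Y; apply: subsetDl.
have inS : forall X x, x \in S :\: X -> x \in S.
  by move=> Y x; rewrite inE => /andP [].
split.
  move=> Y [sY aY]; apply: g; split => //.
  apply: (acyclic_sub (subxx _) _ aY) => x y xS; rewrite eq //; exact: inS xS.
exists X => //; split => //.
apply: (acyclic_sub (subxx _) _ aX) => x y xS; rewrite eq //; exact: inS xS.
Qed.

Lemma comp_restrict (VH VHa : {set T}) mH mHa x : VHa \subset VH ->
  (forall x y, x \in VHa -> mH x y = mHa x y) ->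
  (forall x y, 0 < mHa x y -> y \in VHa) -> x \in VHa ->
  Defs.comp VH mH x = Defs.comp VHa mHa x.
Proof.
move=> sub eq sup xa; apply/eqP; rewrite eqEsubset; apply/andP; split;
  apply/subsetP; apply: comp_sub.
- exact: comp_in.
- move=> y z yU _ /and3P [_ _ p].
  have yA : y \in VHa by apply: (subsetP (comp_subS VHa mHa x)).
  rewrite eq // in p; exact: comp_step yU (sup _ _ p) p.
- exact: comp_in (subsetP sub x xa).
- move=> y z yU _ /and3P [yA zA p].
  apply: comp_step yU (subsetP sub z zA) _; by rewrite eq.
Qed.

Lemma disjI (A B : {set T}) :
  (forall u, u \in A -> u \in B -> False) -> [disjoint A & B].
Proof.
move=> h; rewrite -setI_eq0; apply/eqP/setP => u; rewrite !inE.
by apply/negP => /andP [h1 h2]; apply: (h u).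
Qed.

Lemma disjE (A B : {set T}) u : [disjoint A & B] -> u \in A -> u \in B -> False.
Proof. by move=> d h1; rewrite (disjointFr d h1). Qed.

Lemma two_step mm (msym : forall x y, mm x y = mm y x) z (C1 F1 C2 F2 : {set T}) :
  z_antler setT mm z C1 F1 -> z_antler (setT :\: (C1 :|: F1)) mm z C2 F2 ->
  z_antler setT mm z (C1 :|: C2) (F1 :|: F2).
Proof.
move=> [[[_ d1 a1 e1] g1] [VH1 [mH1 [[s1 sy1 le1 sp1] [[sC1 aC1] g1' cc1]]]]]
       [[[sub2 d2 a2 e2] g2] [VH2 [mH2 [[s2 sy2 le2 sp2] [[sC2 aC2] g2' cc2]]]]].
have nA : forall u, u \in C1 :|: F1 -> u \in C2 :|: F2 -> False.
  by move=> u h1 /(subsetP sub2); rewrite in_setD h1.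
have nV : forall u, u \in VH1 -> u \in VH2 -> False.
  by move=> u /(subsetP s1) h1 /(subsetP s2); apply: nA.
have D1 : forall x y, x \in VH1 -> mH2 x y = 0.
  move=> x y xV; apply/eqP; rewrite -leqn0 leqNgt; apply/negP => p.
  exact: (nV x xV (sp2 _ _ p).1).
have D2 : forall x y, x \in VH2 -> mH1 x y = 0.
  move=> x y xV; apply/eqP; rewrite -leqn0 leqNgt; apply/negP => p.
  exact: (nV x (sp1 _ _ p).1 xV).
set B := (C1 :|: C2) :|: (F1 :|: F2).
have sA1 : C1 :|: F1 \subset B.
  by apply/subsetP => u; rewrite !inE; case: (u \in C1); case: (u \in F1);
     rewrite ?orbT.
have sA2 : C2 :|: F2 \subset B.
  by apply/subsetP => u; rewrite !inE; case: (u \in C2); case: (u \in F2);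
     rewrite ?orbT.
split; first split; first split.
- exact: subsetT.
- apply: disjI => u; rewrite !inE => /orP [] uC /orP [] uF.
  + exact: (disjE d1 uC uF).
  + by apply: (nA u); rewrite inE ?uC ?uF ?orbT.
  + by apply: (nA u); rewrite inE ?uC ?uF ?orbT.
  + exact: (disjE d2 uC uF).
- have sF2 : F2 \subset setT :\: (C1 :|: F1).
    by apply: subset_trans sub2; apply: subsetUr.
  exact: (acyclic_union msym a1 a2 e1 sF2).
- move=> x xF; exact: (comp_bound msym e1 e2 sub2 xF).
- move=> X [sX aX]; apply: (card_two (A1 := C1 :|: F1) (A2 := C2 :|: F2)).
  + apply: g1; split; first exact: subsetIr.
    apply: acyclic_sub aX => //; apply/subsetP => u; rewrite !inE.
    by case: (u \in X); case: (u \in C1); case: (u \in F1); case: (u \in C2); case: (u \in F2).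
  + apply: g2; split; first exact: subsetIr.
    apply: acyclic_sub aX => //; apply/subsetP => u; rewrite !inE.
    by case: (u \in X); case: (u \in C1); case: (u \in F1); case: (u \in C2); case: (u \in F2).
  + by apply: disjI.
exists (VH1 :|: VH2), (fun x y => mH1 x y + mH2 x y); split.
  split.
  - by rewrite subUset (subset_trans s1 sA1) (subset_trans s2 sA2).
  - by move=> x y; rewrite sy1 sy2.
  - move=> x y; case: (posnP (mH1 x y)) => [->|p]; first by rewrite add0n.
    by rewrite D1 ?addn0 // (sp1 _ _ p).1.
  - move=> x y; rewrite addn_gt0 => /orP [] /[dup] p.
      by move=> /sp1 [h1 h2]; rewrite !inE h1 h2.
    by move=> /sp2 [h1 h2]; rewrite !inE h1 h2 !orbT.
split.
- split; first exact: setUSS.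
  move=> hc; have [x0 [x0S [y0 y0S p0] H]] := hc_start hc.
  rewrite addn_gt0 in p0; case/orP: p0 => p0.
    apply: aC1; apply: (H (fun u => u \in VH1)); last exact: (sp1 _ _ p0).1.
    move=> x y xS yS p Px; rewrite D1 // addn0 in p *.
    have yV := (sp1 _ _ p).2.
    move: xS yS; rewrite !inE !negb_or => /andP [/andP [xC _] _] /andP [/andP [yC _] _].
    by split => //; apply/andP; split.
  apply: aC2; apply: (H (fun u => u \in VH2)); last exact: (sp2 _ _ p0).1.
  move=> x y xS yS p Px; rewrite D2 // add0n in p *.
  have yV := (sp2 _ _ p).2.
  move: xS yS; rewrite !inE !negb_or => /andP [/andP [_ xC] _] /andP [/andP [_ yC] _].
  by split => //; apply/andP; split.
- move=> X [sX aX]; apply: (card_two (A1 := VH1) (A2 := VH2)).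
  + apply: g1'; split; first exact: subsetIr.
    apply: (acyclic_sub (S' := (VH1 :|: VH2) :\: X)) aX.
      by apply/subsetP => u; rewrite !inE; case: (u \in X); case: (u \in VH1).
    by move=> x y _; apply: leq_addr.
  + apply: g2'; split; first exact: subsetIr.
    apply: (acyclic_sub (S' := (VH1 :|: VH2) :\: X)) aX.
      by apply/subsetP => u; rewrite !inE; case: (u \in X); case: (u \in VH2);
         rewrite ?orbT.
    by move=> x y _; apply: leq_addl.
  + by apply: disjI.
- move=> x; case/setUP => xV.
    rewrite (comp_restrict (VHa := VH1) (mHa := mH1)) //; first last.
    + by move=> u y p; exact: (sp1 _ _ p).2.
    + by move=> u y uV; rewrite D1 // addn0.
    + exact: subsetUl.
    set K := Defs.comp VH1 mH1 x.
    have KV : forall u, u \in K -> u \in VH1.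
      by move=> u; apply: (subsetP (comp_subS VH1 mH1 x)).
    have -> : (C1 :|: C2) :&: K = C1 :&: K.
      apply/setP => u; rewrite !in_setI !in_setU; case uK: (u \in K); rewrite ?andbF //.
      case uC2: (u \in C2); rewrite ?orbT ?orbF //=.
      case: (nA u); first by rewrite (subsetP s1) // KV.
      by rewrite inE uC2.
    have [f c] := cc1 x xV; split => //.
    by apply: fvs_ext f => u y uK; rewrite D1 ?addn0 // KV.
  rewrite (comp_restrict (VHa := VH2) (mHa := mH2)) //; first last.
  + by move=> u y p; exact: (sp2 _ _ p).2.
  + by move=> u y uV; rewrite D2.
  + exact: subsetUr.
  set K := Defs.comp VH2 mH2 x.
  have KV : forall u, u \in K -> u \in VH2.
    by move=> u; apply: (subsetP (comp_subS VH2 mH2 x)).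
  have -> : (C1 :|: C2) :&: K = C2 :&: K.
    apply/setP => u; rewrite !in_setI !in_setU; case uK: (u \in K); rewrite ?andbF //.
    case uC1: (u \in C1); rewrite ?orbT ?orbF //=.
    case: (nA u); first by rewrite inE uC1.
    by rewrite (subsetP s2) // KV.
  have [f c] := cc2 x xV; split => //.
  by apply: fvs_ext f => u y uK; rewrite D2 // KV.
Qed.

Lemma acyclic0 mm : acyclic set0 mm.
Proof. by move=> hc; have [x0 [] ] := hc_start hc; rewrite inE. Qed.

Lemma z_antler0 mm z : z_antler setT mm z set0 set0.
Proof.
split; first split; first split.
- exact: subsetT.
- by apply: disjI => u; rewrite inE.
- exact: acyclic0.
- by move=> x; rewrite inE.
- by move=> X _; rewrite cards0.
exists set0, (fun _ _ => 0); split.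
  by split => //; exact: sub0set.
split.
- by split; [exact: sub0set | rewrite setD0; exact: acyclic0].
- by move=> X _; rewrite cards0.
- by move=> x; rewrite inE.
Qed.

Lemma bigcupU2 (C F : nat -> {set T}) k :
  \bigcup_(j < k) (C j :|: F j) = (\bigcup_(j < k) C j) :|: (\bigcup_(j < k) F j).
Proof.
elim: k => [|k IH]; first by rewrite !big_ord0 setU0.
by rewrite !big_ord_recr /= IH setUACA.
Qed.

End P.

Theorem proposition27 (T : finType) (m : T -> T -> nat)
  (msym : forall x y, m x y = m y x)
  (z l : nat) (C F : nat -> {set T}) :
  antler_seq [set: T] m z l C F ->
  forall i, 1 <= i <= l ->
    z_antler [set: T] m z (\bigcup_(j < i) C j) (\bigcup_(j < i) F j).
Proof.
move=> [_ [_ za]] i /andP [_ il].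
have H : forall k, k <= l ->
    z_antler [set: T] m z (\bigcup_(j < k) C j) (\bigcup_(j < k) F j).
  elim=> [|k IH] kl; first by rewrite !big_ord0; exact: z_antler0.
  rewrite !big_ord_recr /=; apply: (two_step msym (IH (ltnW kl))).
  by have := za k kl; rewrite bigcupU2.
exact: H.
Qed.
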